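(* Let $n\ge3$, $c^i=c^i(R^i)$ with $c^i\ne c^j$ for $i\neq j$, and $\mathcal{L}=\sum_{i<j}L_{ij}\,\mathrm{d}R^i\wedge\mathrm{d}R^j$ with $L_{ij}=\mu^j_iu_j-\mu^i_ju_i+\frac{(\mu^j-\mu^i)^2}{c^j-c^i}u_iu_j$. Write $\mathrm{d}\mathcal{L}=\sum_{i<j<k}M_{ijk}\,\mathrm{d}R^i\wedge\mathrm{d}R^j\wedge\mathrm{d}R^k$. Then identically (for all smooth $u,\mu^1,\dots,\mu^n$) $$\begin{aligned}M_{ijk}&=\Big(u_{ij}-2\tfrac{\mu^j-\mu^i}{c^j-c^i}u_iu_j\Big)\Big(\mu^i_k-\tfrac{(\mu^k-\mu^i)^2}{c^k-c^i}u_k-\mu^j_k+\tfrac{(\mu^k-\mu^j)^2}{c^k-c^j}u_k\Big)\\&+\Big(u_{jk}-2\tfrac{\mu^k-\mu^j}{c^k-c^j}u_ju_k\Big)\Big(\mu^j_i-\tfrac{(\mu^i-\mu^j)^2}{c^i-c^j}u_i-\mu^k_i+\tfrac{(\mu^i-\mu^k)^2}{c^i-c^k}u_i\Big)\\&+\Big(u_{ik}-2\tfrac{\mu^i-\mu^k}{c^i-c^k}u_ku_i\Big)\Big(\mu^k_j-\tfrac{(\mu^j-\mu^k)^2}{c^j-c^k}u_j-\mu^i_j+\tfrac{(\mu^j-\mu^i)^2}{c^j-c^i}u_j\Big).\end{aligned}$$ In particular, $\mathrm{d}\mathcal{L}$ vanishes to second order on solutions of $\mu^i_j=\frac{(\mu^j-\mu^i)^2}{c^j-c^i}u_j$,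 $u_{ij}=2\frac{\mu^j-\mu^i}{c^j-c^i}u_iu_j$ ($i\neq j$).
   Context: Lower indices denote partial derivatives with respect to $R^1,\dots,R^n$ (e.g. $\mu^i_k=\partial\mu^i/\partial R^k$). The exterior derivative is $\mathrm{d}\mathcal{L}=\sum_{i<j<k}(D_iL_{jk}+D_jL_{ki}+D_kL_{ij})\mathrm{d}R^i\wedge\mathrm{d}R^j\wedge\mathrm{d}R^k$, $D_i$ the total derivative in $R^i$, $L_{ji}=-L_{ij}$. *)

(* Defs.v *)
From HB Require Import structures.
From mathcomp Require Import all_boot all_order all_algebra.
From mathcomp Require Import all_classical all_reals all_analysis.
Set Implicit Arguments. Unset Strict Implicit. Unset Printing Implicit Defensive.
Import Order.TTheory GRing.Theory Num.Theory.
Import numFieldNormedType.Exports.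
Local Open Scope ring_scope.
Local Open Scope classical_set_scope.

Section Defs.
Variables (R : realType) (n : nat).

Definition ecoord (k : 'I_n) : 'rV[R]_n := delta_mx 0 k.

Definition pd (k : 'I_n) (f : 'rV[R]_n -> R) : 'rV[R]_n -> R :=
  fun x => 'D_(ecoord k) f x.

Fixpoint iter_pd (s : seq 'I_n) (f : 'rV[R]_n -> R) : 'rV[R]_n -> R :=
  match s with
  | [::] => f
  | k :: s' => pd k (iter_pd s' f)
  end.

Definition smooth_on (U : set 'rV[R]_n) (f : 'rV[R]_n -> R) : Prop :=
  forall (s : seq 'I_n) (x : 'rV[R]_n), U x -> differentiable (iter_pd s f) x.

(* c^i = c^i(R^i) seen as a function on R^n *)
Definition cfun (c : 'I_n -> R -> R) (i : 'I_n) : 'rV[R]_n -> R :=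
  fun x => c i (x ord0 i).

Definition Lcoef (c : 'I_n -> R -> R) (u : 'rV[R]_n -> R)
    (mu : 'I_n -> 'rV[R]_n -> R) (i j : 'I_n) : 'rV[R]_n -> R :=
  fun x => pd i (mu j) x * pd j u x - pd j (mu i) x * pd i u x
    + (mu j x - mu i x) ^+ 2 / (cfun c j x - cfun c i x) * pd i u x * pd j u x.

(* coefficient of dR^i /\ dR^j /\ dR^k in dL *)
Definition Mcoef (c : 'I_n -> R -> R) (u : 'rV[R]_n -> R)
    (mu : 'I_n -> 'rV[R]_n -> R) (i j k : 'I_n) : 'rV[R]_n -> R :=
  fun x => pd i (Lcoef c u mu j k) x + pd j (Lcoef c u mu k i) x
         + pd k (Lcoef c u mu i j) x.

End Defs.

(* Main.v *)
Require Import Defs.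
From HB Require Import structures.
From mathcomp Require Import all_boot all_order all_algebra.
From mathcomp Require Import all_classical all_reals all_analysis.
From mathcomp Require Import ring lra.
Import Order.TTheory GRing.Theory Num.Theory.
Import numFieldNormedType.Exports.
Local Open Scope ring_scope.
Local Open Scope classical_set_scope.

Lemma pilot_aux3 (R : realFieldType) (z a b e : R) :
  0 < e -> z <= a + b -> a < e -> b < e -> z = 3 * e -> False.
Proof. move=> *; lra. Qed.

Lemma pilot_aux_sw (R : comRingType) (a1 a2 b c d : R) : a1 = a2 -> a1 - b - c + d = a2 - c - b + d.
Proof. by move=> ->; ring. Qed.
Lemma pilot_aux_sub (R : comRingType) (a b c : R) : a - b = (a - c) - (b - c).
Proof. by ring. Qed.

Lemma pilot_aux4 (R : realFieldType) (X Y Z W ha h d : R) :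
  X <= Z -> Y <= W -> Z + W = ha -> ha + h = d -> 0 < h -> X + Y < d.
Proof. move=> *; lra. Qed.

Lemma pilot_aux_E (R : realFieldType) (F1 G2 h D1 D2 : R) :
  h != 0 -> D1 = F1 * h -> D2 = G2 * h -> D1 = D2 -> F1 = G2.
Proof. by move=> h0 -> -> /(mulIf h0). Qed.
Lemma pilot_aux_fin (R : realFieldType) (Fx Gx Fy Gy e : R) : 0 < e -> Fy = Gy ->
  `|Fx - Fy| < e -> `|Gx - Gy| < e -> `|Fx - Gx| = 3 * e -> False.
Proof.
move=> e0 E n1 n2 H3.
have : `|Fx - Gx| <= `|Fx - Fy| + `|Gx - Gy|.
  have -> : Fx - Gx = (Fx - Fy) - (Gx - Gy) by rewrite E; ring.
  exact: ler_normB.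
lra.
Qed.

Section Sch.
Variables (R : realType) (V : normedModType R).

Lemma pilot_line_eq (f : V -> R) (p v : V) (t : R) :
  (fun h : R => h^-1 *: (((fun s : R => f (s *: v + p)) \o shift t) (h *: 1) - f (t *: v + p)))
  = (fun h : R => h^-1 *: ((f \o shift (t *: v + p)) (h *: v) - f (t *: v + p))).
Proof.
apply: funext => h /=; congr (_ *: (f _ - _)).
by rewrite /shift /= [h *: 1]mulr1 scalerDl addrA.
Qed.

Lemma pilot_is_derive_line (f : V -> R) (p v : V) (t : R) :
  differentiable f (t *: v + p) ->
  is_derive t 1 (fun s => f (s *: v + p)) ('D_v f (t *: v + p)).
Proof.
move=> df; have dv : derivable f (t *: v + p) v by exact: diff_derivable.
split; first by rewrite /derivable pilot_line_eq.
by rewrite /derive pilot_line_eq.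
Qed.


Lemma pilot_square_mvt (f : V -> R) (x v w : V) (B : set V) (h : R) : 0 < h ->
  (forall t s, 0 <= t <= h -> 0 <= s <= h ->
     B (t *: v + (s *: w + x)) /\ B (t *: w + (s *: v + x))) ->
  (forall y, B y -> differentiable f y /\ differentiable ('D_v f) y) ->
  exists2 y, B y & f (h *: v + (h *: w + x)) - f (h *: v + x) - f (h *: w + x) + f x
     = 'D_w ('D_v f) y * (h * h).
Proof.
move=> h0 HB Hd.
have h00 : (0:R) <= 0 <= h by rewrite lexx ltW.
have hhh : 0 <= h <= h by apply/andP; split => //; apply: ltW.
pose g t := f (t *: v + (h *: w + x)) - f (t *: v + x).
have dg t : 0 <= t <= h ->
    is_derive t 1 g ('D_v f (t *: v + (h *: w + x)) - 'D_v f (t *: v + x)).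
  move=> th; apply: is_deriveB; apply: pilot_is_derive_line.
    by apply: (Hd _ (HB t h th hhh).1).1.
  have := (HB t 0 th h00).1; rewrite scale0r add0r => /Hd [] //.
have [xi xih Exi] : exists2 c, c \in `[0, h]%R & g h - g 0 =
    ('D_v f (c *: v + (h *: w + x)) - 'D_v f (c *: v + x)) * (h - 0).
  apply: (MVT_segment (ltW h0)).
    move=> t; rewrite in_itv /= => /andP[t0 th]; by apply: dg; rewrite (ltW t0) (ltW th).
  apply: derivable_within_continuous => t; rewrite in_itv /= => th.
  by have [] := dg _ th.
have xih' : 0 <= xi <= h by move: xih; rewrite in_itv.
pose k s := 'D_v f (s *: w + (xi *: v + x)).
have dk s : 0 <= s <= h -> is_derive s 1 k ('D_w ('D_v f) (s *: w + (xi *: v + x))).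
  move=> sh; apply: pilot_is_derive_line.
  by apply: (Hd _ (HB s xi sh xih').2).2.
have [eta etah Eeta] : exists2 c, c \in `[0, h]%R & k h - k 0 =
    'D_w ('D_v f) (c *: w + (xi *: v + x)) * (h - 0).
  apply: (MVT_segment (ltW h0)).
    move=> t; rewrite in_itv /= => /andP[t0 th]; by apply: dk; rewrite (ltW t0) (ltW th).
  apply: derivable_within_continuous => t; rewrite in_itv /= => th.
  by have [] := dk _ th.
have etah' : 0 <= eta <= h by move: etah; rewrite in_itv.
exists (eta *: w + (xi *: v + x)); first exact: (HB eta xi etah' xih').2.
have -> : f (h *: v + (h *: w + x)) - f (h *: v + x) - f (h *: w + x) + f x
    = g h - g 0 by rewrite /g !scale0r !add0r; lra.
rewrite Exi subr0.
have <- : k h = 'D_v f (xi *: v + (h *: w + x)) by rewrite /k addrCA.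
have <- : k 0 = 'D_v f (xi *: v + x) by rewrite /k scale0r add0r.
rewrite Eeta subr0; lra.
Qed.


Lemma pilot_schwarz (f : V -> R) (U : set V) (x v w : V) : open U -> U x ->
  (forall y, U y -> [/\ differentiable f y, differentiable ('D_v f) y,
     differentiable ('D_w f) y, differentiable ('D_w ('D_v f)) y &
     differentiable ('D_v ('D_w f)) y]) ->
  'D_w ('D_v f) x = 'D_v ('D_w f) x.
Proof.
move=> oU Ux Hd.
have [//|neq] := eqVneq ('D_w ('D_v f) x) ('D_v ('D_w f) x).
set e := `|'D_w ('D_v f) x - 'D_v ('D_w f) x| / 3.
have e0 : 0 < e by rewrite divr_gt0 // normr_gt0 subr_eq0.
have [_ _ _ dF dG] := Hd x Ux.
have cF : \forall y \near x, `|'D_w ('D_v f) x - 'D_w ('D_v f) y| < e.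
  exact: (@cvgr_dist_lt _ _ _ (nbhs x) _ ('D_w ('D_v f)) ('D_w ('D_v f) x) (differentiable_continuous dF) e e0).
have cG : \forall y \near x, `|'D_v ('D_w f) x - 'D_v ('D_w f) y| < e.
  exact: (@cvgr_dist_lt _ _ _ (nbhs x) _ ('D_v ('D_w f)) ('D_v ('D_w f) x) (differentiable_continuous dG) e e0).
have nU : \forall y \near x, U y by apply: open_nbhs_nbhs.
have N : \forall y \near x, [/\ U y, `|'D_w ('D_v f) x - 'D_w ('D_v f) y| < e & `|'D_v ('D_w f) x - 'D_v ('D_w f) y| < e].
  move: nU cF cG; apply: filterS3 => y a b c; by split.
move/nbhs_normP: N => [d /= d0 Hdd].
set a := `|v| + `|w|.
have a0 : 0 <= a by rewrite addr_ge0.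
set h := d / (a + 1).
have h0 : 0 < h by rewrite divr_gt0 // ltr_wpDl.
have hd : h * (a + 1) = d by rewrite /h divfK // gt_eqF // ltr_wpDl.
have inB t s (p q : V) : 0 <= t <= h -> 0 <= s <= h -> `|p| + `|q| = a ->
    `|x - (t *: p + (s *: q + x))| < d.
  move=> /andP[t0 th] /andP[s0 sh] pq.
  rewrite distrC addrA addrK.
  apply: (le_lt_trans (ler_normD _ _)).
  rewrite !normrZ !ger0_norm //.
  have e1 : t * `|p| <= h * `|p| by rewrite ler_wpM2r.
  have e2 : s * `|q| <= h * `|q| by rewrite ler_wpM2r.
  have e3 : h * `|p| + h * `|q| = h * a by rewrite -pq mulrDr.
  move: hd; rewrite mulrDr mulr1 => hd.
  exact: (@pilot_aux4 R _ _ _ _ _ _ _ e1 e2 e3 hd h0).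
have HB (p q : V) : `|p| + `|q| = a -> forall t s, 0 <= t <= h -> 0 <= s <= h ->
    `|x - (t *: p + (s *: q + x))| < d /\ `|x - (t *: q + (s *: p + x))| < d.
  move=> pq t s ht hs; split; apply: inB => //; by rewrite addrC.
have [y1 By1 E1] := @pilot_square_mvt f x v w (fun y => `|x - y| < d) h h0 (HB v w erefl)
  (fun y By => let: And3 Uy _ _ := Hdd y By in
               let: And5 d1 d2 _ _ _ := Hd y Uy in conj d1 d2).
have [y2 By2 E2] := @pilot_square_mvt f x w v (fun y => `|x - y| < d) h h0 (HB w v (addrC _ _))
  (fun y By => let: And3 Uy _ _ := Hdd y By in
               let: And5 d1 _ d3 _ _ := Hd y Uy in conj d1 d3).
have hh : h * h != 0 by rewrite mulf_neq0 // gt_eqF.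
have Deq : f (h *: v + (h *: w + x)) - f (h *: v + x) - f (h *: w + x) + f x =
  f (h *: w + (h *: v + x)) - f (h *: w + x) - f (h *: v + x) + f x.
  by apply: pilot_aux_sw; rewrite addrCA.
have E := @pilot_aux_E R _ _ _ _ _ hh E1 E2 Deq.
have [_ n1 _] := Hdd y1 By1.
have [_ _ n2] := Hdd y2 By2.
have H3 : `|'D_w ('D_v f) x - 'D_v ('D_w f) x| = 3 * e by rewrite /e mulrC divfK.
by case: (@pilot_aux_fin R _ _ _ _ _ e0 E n1 n2 H3).
Qed.

End Sch.


Section Gen.
Variables (R : realType) (V : normedModType R).
Implicit Types f g : V -> R.

Lemma isdD {f g x v df dg} : is_derive x v f df -> is_derive x v g dg ->
  is_derive x v (fun y => f y + g y) (df + dg).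
Proof. exact: is_deriveD. Qed.
Lemma isdB {f g x v df dg} : is_derive x v f df -> is_derive x v g dg ->
  is_derive x v (fun y => f y - g y) (df - dg).
Proof. exact: is_deriveB. Qed.
Lemma isdM {f g x v df dg} : is_derive x v f df -> is_derive x v g dg ->
  is_derive x v (fun y => f y * g y) (f x * dg + g x * df).
Proof. exact: is_deriveM. Qed.
Lemma isdV {f x v df} : f x != 0 -> is_derive x v f df ->
  is_derive x v (fun y => (f y)^-1) (- (f x) ^- 2 * df).
Proof.
move=> fx0 [d1 d2]; split; first exact: derivableV.
by rewrite deriveV // d2.
Qed.
Lemma isd2 {f x v df} : is_derive x v f df ->
  is_derive x v (fun y => f y ^+ 2) (2 * f x * df).
Proof.
move=> H; have := isdM H H; congr is_derive; lra.
Qed.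
Lemma isd_diff {f x v} : differentiable f x -> is_derive x v f ('D_v f x).
Proof. by move=> df; apply: derivableP; exact: diff_derivable. Qed.

Lemma pilot_dLgen (A B C D P Q Ck Cj : V -> R) x v dA dB dC dD dP dQ dCk dCj :
  is_derive x v A dA -> is_derive x v B dB -> is_derive x v C dC ->
  is_derive x v D dD -> is_derive x v P dP -> is_derive x v Q dQ ->
  is_derive x v Ck dCk -> is_derive x v Cj dCj -> Ck x - Cj x != 0 ->
  'D_v (fun y => A y * B y - C y * D y
        + (P y - Q y) ^+ 2 / (Ck y - Cj y) * D y * B y) x =
  A x * dB + B x * dA - (C x * dD + D x * dC)
  + (((P x - Q x) ^+ 2 / (Ck x - Cj x)) * D x * dB
  + B x * (((P x - Q x) ^+ 2 / (Ck x - Cj x)) * dD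
  + D x * ((P x - Q x) ^+ 2 * (- (Ck x - Cj x) ^- 2 * (dCk - dCj))
           + (Ck x - Cj x)^-1 * (2 * (P x - Q x) * (dP - dQ))))).
Proof.
move=> hA hB hC hD hP hQ hCk hCj nz.
have [_ ->] := isdD (isdB (isdM hA hB) (isdM hC hD))
  (isdM (isdM (isdM (isd2 (isdB hP hQ)) (isdV nz (isdB hCk hCj))) hD) hB).
by [].
Qed.
End Gen.
Arguments pilot_dLgen {R V A B C D P Q Ck Cj x v dA dB dC dD dP dQ dCk dCj}.


Lemma pilot_alg (R : realType) (I : Type) (i j k : I) (m C Ud : I -> R) (Dm Du : I -> I -> R)
  (T : I -> I -> I -> R) :
  Du j i = Du i j -> Du k j = Du j k -> Du k i = Du i k ->
  T i j k = T j i k -> T i k j = T k i j -> T j k i = T k j i ->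
  C j - C i != 0 -> C k - C j != 0 -> C k - C i != 0 ->
  (Dm j k * Du i k + Ud k * T i j k - (Dm k j * Du i j + Ud j * T i k j)
  + (((m k - m j) ^+ 2 / (C k - C j)) * Ud j * Du i k
  + Ud k * (((m k - m j) ^+ 2 / (C k - C j)) * Du i j
  + Ud j * ((m k - m j) ^+ 2 * (- (C k - C j) ^- 2 * (0 - 0))
  + (C k - C j)^-1 * (2 * (m k - m j) * (Dm i k - Dm i j))))))
 + (Dm k i * Du j i + Ud i * T j k i - (Dm i k * Du j k + Ud k * T j i k)
  + (((m i - m k) ^+ 2 / (C i - C k)) * Ud k * Du j i
  + Ud i * (((m i - m k) ^+ 2 / (C i - C k)) * Du j k
  + Ud k * ((m i - m k) ^+ 2 * (- (C i - C k) ^- 2 * (0 - 0))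
  + (C i - C k)^-1 * (2 * (m i - m k) * (Dm j i - Dm j k))))))
 + (Dm i j * Du k j + Ud j * T k i j - (Dm j i * Du k i + Ud i * T k j i)
  + (((m j - m i) ^+ 2 / (C j - C i)) * Ud i * Du k j
  + Ud j * (((m j - m i) ^+ 2 / (C j - C i)) * Du k i
  + Ud i * ((m j - m i) ^+ 2 * (- (C j - C i) ^- 2 * (0 - 0))
  + (C j - C i)^-1 * (2 * (m j - m i) * (Dm k j - Dm k i))))))
 =
    (Du i j - 2 * (m j - m i) / (C j - C i) * Ud i * Ud j)
    * (Dm k i - (m k - m i) ^+ 2 / (C k - C i) * Ud k
       - Dm k j + (m k - m j) ^+ 2 / (C k - C j) * Ud k)
  + (Du j k - 2 * (m k - m j) / (C k - C j) * Ud j * Ud k)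
    * (Dm i j - (m i - m j) ^+ 2 / (C i - C j) * Ud i
       - Dm i k + (m i - m k) ^+ 2 / (C i - C k) * Ud i)
  + (Du i k - 2 * (m i - m k) / (C i - C k) * Ud k * Ud i)
    * (Dm j k - (m j - m k) ^+ 2 / (C j - C k) * Ud j
       - Dm j i + (m j - m i) ^+ 2 / (C j - C i) * Ud j).
Proof.
move=> s1 s2 s3 t1 t2 t3 n1 n2 n3.
rewrite s1 s2 s3 t1 t2 t3.
rewrite -[C i - C j]opprB -[C j - C k]opprB -[C i - C k]opprB !invrN.
rewrite ?subrr ?mulr0 ?mul0r ?add0r ?addr0.
move: (C i) (C j) (C k) n1 n2 n3 => ci cj ck n1 n2 n3.
rewrite /GRing.exp /=.
field; by rewrite ?n1 ?n2 ?n3.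
Qed.

Lemma pilot_cfun_const (R : realType) n (c : 'I_n -> R -> R) (i j : 'I_n) (x : 'rV[R]_n) :
  i != j -> is_derive x (ecoord R i) (cfun c j) 0.
Proof.
move=> ij.
have E : (fun h : R => h^-1 *: ((cfun c j \o shift x) (h *: ecoord R i) - cfun c j x))
   = (fun h : R => h^-1 *: ((cst (cfun c j x) \o shift x) (h *: ecoord R i) - cst (cfun c j x) x)).
  apply: funext => h /=; congr (_ *: (_ - _)).
  by rewrite /cfun /shift /ecoord /= !mxE /= eq_sym (negbTE ij) mulr0 add0r.
split; first by rewrite /derivable E; exact: derivable_cst.
by rewrite /derive E; exact: derive_cst.
Qed.

Theorem mainTheorem11 (R : realType) (n : nat) (U : set 'rV[R]_n)
  (c : 'I_n -> R -> R) (u : 'rV[R]_n -> R) (mu : 'I_n -> 'rV[R]_n -> R) :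
  (3 <= n)%N ->
  open U ->
  (forall i, smooth_on U (cfun c i)) ->
  (forall i j (x : 'rV[R]_n), U x -> i != j -> cfun c i x != cfun c j x) ->
  smooth_on U u ->
  (forall i, smooth_on U (mu i)) ->
  forall (i j k : 'I_n), (i < j)%N -> (j < k)%N ->
  forall x, U x ->
  let cc := cfun c in
  let ui := pd i u x in let uj := pd j u x in let uk := pd k u x in
  Mcoef c u mu i j k x =
    (pd i (pd j u) x - 2 * (mu j x - mu i x) / (cc j x - cc i x) * ui * uj)
    * (pd k (mu i) x - (mu k x - mu i x) ^+ 2 / (cc k x - cc i x) * uk
       - pd k (mu j) x + (mu k x - mu j x) ^+ 2 / (cc k x - cc j x) * uk)
  + (pd j (pd k u) x - 2 * (mu k x - mu j x) / (cc k x - cc j x) * uj * uk)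
    * (pd i (mu j) x - (mu i x - mu j x) ^+ 2 / (cc i x - cc j x) * ui
       - pd i (mu k) x + (mu i x - mu k x) ^+ 2 / (cc i x - cc k x) * ui)
  + (pd i (pd k u) x - 2 * (mu i x - mu k x) / (cc i x - cc k x) * uk * ui)
    * (pd j (mu k) x - (mu j x - mu k x) ^+ 2 / (cc j x - cc k x) * uj
       - pd j (mu i) x + (mu j x - mu i x) ^+ 2 / (cc j x - cc i x) * uj).
Proof.
move=> _ oU _ cne su smu i j k ij jk x Ux cc ui uj uk.
have ik : (i < k)%N by apply: ltn_trans ij jk.
have nij : i != j by rewrite neq_ltn ij.
have nji : j != i by rewrite neq_ltn ij orbT.
have njk : j != k by rewrite neq_ltn jk.
have nkj : k != j by rewrite neq_ltn jk orbT.
have nik : i != k by rewrite neq_ltn ik.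
have nki : k != i by rewrite neq_ltn ik orbT.
have cn a b : a != b -> cc a x - cc b x != 0 by move=> ab; rewrite subr_eq0 cne.
have sch g a b : smooth_on U g -> pd a (pd b g) x = pd b (pd a g) x.
  move=> sg; apply: (@pilot_schwarz R _ g U x) => // y Uy; split.
  - exact: (sg [::] y Uy).
  - exact: (sg [:: b] y Uy).
  - exact: (sg [:: a] y Uy).
  - exact: (sg [:: a; b] y Uy).
  - exact: (sg [:: b; a] y Uy).
have d0 g a : smooth_on U g -> is_derive x (ecoord R a) g (pd a g x).
  by move=> sg; apply: isd_diff; exact: (sg [::] x Ux).
have d1 g a b : smooth_on U g -> is_derive x (ecoord R a) (pd b g) (pd a (pd b g) x).
  by move=> sg; apply: isd_diff; exact: (sg [:: b] x Ux).
have L a b e : a != b -> a != e -> e != b ->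
   pd a (Lcoef c u mu b e) x = _ :=
   fun ab ae eb => pilot_dLgen (d1 (mu e) a b (smu e)) (d1 u a e su)
     (d1 (mu b) a e (smu b)) (d1 u a b su) (d0 _ a (smu e)) (d0 _ a (smu b))
     (@pilot_cfun_const R n c a e x ae) (@pilot_cfun_const R n c a b x ab) (cn e b eb).
rewrite /Mcoef (L i j k nij nik nkj) (L j k i njk nji nik) (L k i j nki nkj nji).
exact: (@pilot_alg R 'I_n i j k (fun a => mu a x) (fun a => cfun c a x) (fun a => pd a u x)
  (fun a b => pd a (mu b) x) (fun a b => pd a (pd b u) x) (fun a b e => pd a (pd b (mu e)) x)
  (sch u j i su) (sch u k j su) (sch u k i su)
  (sch (mu k) i j (smu k)) (sch (mu j) i k (smu j)) (sch (mu i) j k (smu i))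
  (cn j i nji) (cn k j nkj) (cn k i nki)).
Qed.
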